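(* Let $\ell$ be a prime and let $R,S,T$ be pairwise coprime positive integers. Let $S'=\prod_{q:\ \operatorname{ord}_q(S)\text{ odd}} q$, let $v$ be the positive integer with $SS'=v^2$, let $u=RS'$, and write $TS'=mn^2$ with $m$ a squarefree positive integer and $n$ a positive integer. Let $K=\mathbb{Q}(\sqrt{-m})$, let $\epsilon\in K^*$ be a representative of an element of $\mathcal{E}$, and let $\mathfrak{q}$ be a prime ideal of the ring of integers of $K$. Suppose one of the following holds: (i) $\operatorname{ord}_{\mathfrak q}(v)$, $\operatorname{ord}_{\mathfrak q}(n\sqrt{-m})$, $\operatorname{ord}_{\mathfrak q}(\epsilon)$ are pairwise distinct modulo $\ell$; (ii) $\operatorname{ord}_{\mathfrak q}(2v)$, $\operatorname{ord}_{\mathfrak q}(\epsilon)$, $\operatorname{ord}_{\mathfrak q}(\overline{\epsilon})$ are pairwise distinct modulo $\ell$; (iii) $\operatorname{ord}_{\mathfrak q}(2n\sqrt{-m})$, $\operatorname{ord}_{\mathfrak q}(\epsilon)$, $\operatorname{ord}_{\mathfrak q}(\overline{\epsilon})$ are pairwise distinct modulo $\ell$. Then there are no $\sigma\in\mathbb{Z}$ and $\eta\in K$ satisfying \[ v\sigma^\ell+n\sqrt{-m}=\epsilon\eta^\ell . \]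
   Context: $\mathcal{O}$ denotes the ring of integers of $K$ and $\overline{\cdot}$ complex conjugation. Let $\mathfrak{S}$ be the set of prime ideals of $\mathcal{O}$ dividing $u$ or $2n\sqrt{-m}$. The $\ell$-Selmer group is $K(\mathfrak{S},\ell)=\{\epsilon\in K^*/K^{*\ell}:\operatorname{ord}_{\mathfrak P}(\epsilon)\equiv 0\pmod\ell \text{ for all prime ideals }\mathfrak P\notin\mathfrak{S}\}$, and $\mathcal{E}=\{\epsilon\in K(\mathfrak{S},\ell): \operatorname{Norm}(\epsilon)/u\in\mathbb{Q}^{*\ell}\}$. *)

(* Defs.v *)
(* K = Q(sqrt(-m)) is realised inside algC. *)
From Stdlib Require Import ClassicalEpsilon.
From mathcomp Require Import all_boot all_order all_algebra all_field.
Set Implicit Arguments. Unset Strict Implicit. Unset Printing Implicit Defensive.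
Import Order.TTheory GRing.Theory Num.Theory.
Local Open Scope ring_scope.

Definition sqrtm (m : nat) : algC := sqrtC (- (m%:R)).

Definition inK (m : nat) (x : algC) : Prop :=
  exists a b : rat, x = ratr a + ratr b * sqrtm m.

Definition inO (m : nat) (x : algC) : Prop := inK m x /\ x \in Aint.

Definition prime_ideal (m : nat) (P : algC -> Prop) : Prop :=
  (forall x, P x -> inO m x) /\
  P 0 /\
  (forall x y, P x -> P y -> P (x - y)) /\
  (forall a x, inO m a -> P x -> P (a * x)) /\
  ~ P 1 /\
  (exists x, P x /\ x != 0) /\
  (forall x y, inO m x -> inO m y -> P (x * y) -> P x \/ P y).

(* membership in the ideal power P^k of O (P^0 = O) *)
Inductive ipow (m : nat) (P : algC -> Prop) : nat -> algC -> Prop :=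
  | ipow_O x : inO m x -> ipow m P 0 x
  | ipow_0 k : ipow m P k 0
  | ipow_add k x y : ipow m P k x -> ipow m P k y -> ipow m P k (x + y)
  | ipow_mul k a b : P a -> ipow m P k b -> ipow m P k.+1 (a * b).

Definition ordO_rel (m : nat) (P : algC -> Prop) (y : algC) (j : nat) : Prop :=
  ipow m P j y /\ ~ ipow m P j.+1 y.

(* ord_P(x) = k for nonzero x in K, via x = y / d with y in O, d a positive integer *)
Definition ord_rel (m : nat) (P : algC -> Prop) (x : algC) (k : int) : Prop :=
  [/\ inK m x, x != 0 &
      exists (d j1 j2 : nat), [/\ (0 < d)%N, inO m (d%:R * x),
        ordO_rel m P (d%:R * x) j1, ordO_rel m P d%:R j2 & k = j1%:Z - j2%:Z]].

Definition ord (m : nat) (P : algC -> Prop) (x : algC) : int :=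
  @epsilon int (inhabits 0) (ord_rel m P x).

Definition squarefree (m : nat) : Prop :=
  forall p, prime p -> ~~ (p ^ 2 %| m)%N.

Definition Sprime (S : nat) : nat :=
  (\prod_(q <- primes S | odd (logn q S)) q)%N.

(* epsilon (nonzero, in K) represents an element of the set E, for the data l, u, n, m.
   S-frak = primes of O dividing u or 2 n sqrt(-m). *)
Definition in_E (l u n m : nat) (eps : algC) : Prop :=
  [/\ inK m eps, eps != 0,
      (forall P, prime_ideal m P -> ~ P u%:R -> ~ P (2%:R * n%:R * sqrtm m) ->
         ((l%:Z) %| ord m P eps)%Z)
    & exists r : rat, r != 0 /\ (eps * eps^*) / u%:R = ratr r ^+ l].

Definition pw_distinct_mod (l : nat) (a b c : int) : Prop :=
  [/\ (a != b %[mod l%:Z])%Z, (a != c %[mod l%:Z])%Z & (b != c %[mod l%:Z])%Z].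

(* Main.v *)
Require Import Defs.
From mathcomp Require Import all_boot all_order all_algebra all_field.
From mathcomp Require Import ring lra zify.
From Stdlib Require Import Classical ClassicalEpsilon.
Import Order.TTheory GRing.Theory Num.Theory.
Local Open Scope ring_scope.

Section Basics.
Variable m : nat.
Hypothesis m_gt0 : (0 < m)%N.
Local Notation w := (sqrtm m).

Lemma w_sq : w * w = - m%:R.
Proof. by rewrite -expr2 /sqrtm sqrtCK. Qed.

Lemma w_conj : w^* = - w.
Proof.
have h2 : w^* * w^* = w * w.
  rewrite -rmorphM w_sq. by rewrite rmorphN rmorph_nat.
have : (w^* - w) * (w^* + w) = 0.
  by rewrite mulrDr !mulrBl h2 mulrC; ring.
move/eqP; rewrite mulf_eq0 => /orP[|/eqP]; last by move=> h; apply/eqP; rewrite -addr_eq0; apply/eqP.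
rewrite subr_eq0 => /eqP h.
have := mul_conjC_ge0 w; rewrite h w_sq oppr_ge0 lern0 => /eqP hm.
by move: m_gt0; rewrite hm.
Qed.

Lemma w_neq0 : w != 0.
Proof. by rewrite /sqrtm sqrtC_eq0 oppr_eq0 pnatr_eq0 -lt0n. Qed.

Lemma conj_ratr (a : rat) : (ratr a : algC)^* = ratr a.
Proof. by rewrite (fmorph_rat (@Num.conj_op algC)). Qed.

Lemma inK_rat a : inK m (ratr a).
Proof. by exists a, 0; rewrite rmorph0 mul0r addr0. Qed.
Lemma inK_w : inK m w.
Proof. by exists 0, 1; rewrite rmorph0 rmorph1 mul1r add0r. Qed.
Lemma inK_nat (n : nat) : inK m n%:R.
Proof. by rewrite -(ratr_nat (algC : fieldType)); apply: inK_rat. Qed.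
Lemma inK_int (n : int) : inK m n%:~R.
Proof. by rewrite -(ratr_int (algC : fieldType)); apply: inK_rat. Qed.

Lemma inK_add {x y} : inK m x -> inK m y -> inK m (x + y).
Proof.
move=> [a [b ->]] [c [d ->]]; exists (a + c), (b + d).
rewrite !rmorphD /=; ring.
Qed.
Lemma inK_opp {x} : inK m x -> inK m (- x).
Proof. by move=> [a [b ->]]; exists (- a), (- b); rewrite !rmorphN /=; ring. Qed.
Lemma inK_sub {x y} : inK m x -> inK m y -> inK m (x - y).
Proof. by move=> hx hy; apply: inK_add => //; apply: inK_opp. Qed.
Lemma inK_mul {x y} : inK m x -> inK m y -> inK m (x * y).
Proof.
move=> [a [b ->]] [c [d ->]]; exists (a * c - m%:R * b * d), (a * d + b * c).
rewrite !(rmorphD, rmorphN, rmorphB, rmorphM) /= ratr_nat.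
apply/eqP; rewrite -subr_eq0; apply/eqP.
have -> : forall A B C D M W : algC, (A + B * W) * (C + D * W) - (A * C - M * B * D + (A * D + B * C) * W)
   = (W * W + M) * (B * D) by move=> *; ring.
by rewrite w_sq addNr mul0r.
Qed.
Lemma conj_form a b : (ratr a + ratr b * w)^* = ratr a - ratr b * w.
Proof. by rewrite rmorphD /= conj_ratr rmorphM /= conj_ratr w_conj mulrN. Qed.

Lemma inK_conj {x} : inK m x -> inK m x^*.
Proof.
move=> [a [b ->]]; exists a, (- b).
by rewrite conj_form rmorphN mulNr.
Qed.
Lemma inK_exp {x} k : inK m x -> inK m (x ^+ k).
Proof.
move=> hx; elim: k => [|k IH]; first by rewrite expr0; apply: (inK_nat 1).
by rewrite exprS; apply: inK_mul.
Qed.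

Lemma K_trace_rat x : inK m x -> x + x^* \in Crat.
Proof.
move=> [a [b ->]]; rewrite conj_form.
have -> : ratr a + ratr b * w + (ratr a - ratr b * w) = ratr (a + a) by rewrite rmorphD; ring.
exact: Crat_rat.
Qed.
Lemma K_norm_rat x : inK m x -> x * x^* \in Crat.
Proof.
move=> [a [b ->]]; rewrite conj_form.
have -> : (ratr a + ratr b * w) * (ratr a - ratr b * w) = ratr (a * a + m%:R * b * b).
  rewrite rmorphD !rmorphM /= ratr_nat.
  apply/eqP; rewrite -subr_eq0; apply/eqP.
  have -> : forall A B W M : algC, (A + B * W) * (A - B * W) - (A * A + M * B * B) = - (W * W + M) * (B * B) by move=> *; ring.
  by rewrite w_sq addNr oppr0 mul0r.
exact: Crat_rat.
Qed.

Lemma Aint_w : w \in Aint.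
Proof.
apply: (@root_monic_Aint ('X^2 + (m%:R)%:P)).
- by rewrite rootE !hornerE /sqrtm sqrtCK addNr.
- exact: monicXnaddC.
- by rewrite polyOverXnaddC natr_int.
Qed.

Lemma Aint_conj x : x \in Aint -> x^* \in Aint.
Proof. by rewrite (Aint_aut (@Num.conj_op algC)). Qed.

Lemma Aint_tn z : z + z^* \in Num.int -> z * z^* \in Num.int -> z \in Aint.
Proof.
move=> ht hn.
apply: (@root_monic_Aint (('X - z%:P) * ('X - (z^*)%:P))).
- by rewrite rootM root_XsubC eqxx.
- by rewrite monicMl ?monicXsubC.
- have -> : ('X - z%:P) * ('X - (z^*)%:P) = 'X * 'X - (z + z^*)%:P * 'X + (z * z^*)%:P.
    rewrite polyCD polyCM; ring.
  have h : ('X * 'X - (z + z^*)%:P * 'X + (z * z^*)%:P) \is a polyOver Num.int_num_subdef.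
    by rewrite rpredD ?rpredB ?rpredM ?polyOverX ?polyOverC.
  exact: h.
Qed.


Lemma inO_add {x y} : inO m x -> inO m y -> inO m (x + y).
Proof. by move=> [? ?] [? ?]; split; [apply: inK_add | apply: rpredD]. Qed.
Lemma inO_opp {x} : inO m x -> inO m (- x).
Proof. by move=> [? ?]; split; [apply: inK_opp | rewrite -sub0r rpredB ?Aint0]. Qed.
Lemma inO_sub {x y} : inO m x -> inO m y -> inO m (x - y).
Proof. by move=> hx hy; apply: inO_add => //; apply: inO_opp. Qed.
Lemma inO_mul {x y} : inO m x -> inO m y -> inO m (x * y).
Proof. by move=> [? ?] [? ?]; split; [apply: inK_mul | apply: rpredM]. Qed.
Lemma inO_nat (n : nat) : inO m n%:R.
Proof. by split; [apply: inK_nat | apply: Aint_Cnat; apply: natr_nat]. Qed.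
Lemma inO_int (n : int) : inO m n%:~R.
Proof. by split; [apply: inK_int | apply: Aint_int]. Qed.
Lemma inO_conj {x} : inO m x -> inO m x^*.
Proof. by move=> [? ?]; split; [apply: inK_conj | apply: Aint_conj]. Qed.
Lemma inO_w : inO m w.
Proof. by split; [apply: inK_w | apply: Aint_w]. Qed.
Lemma inO_exp {x} k : inO m x -> inO m (x ^+ k).
Proof.
move=> hx; elim: k => [|k IH]; first by rewrite expr0; apply: (inO_nat 1).
by rewrite exprS; apply: inO_mul.
Qed.

Lemma inO_trace {x} : inO m x -> x + x^* \in Num.int.
Proof.
move=> [hk ha]; apply: Cint_rat_Aint; first exact: K_trace_rat.
by rewrite rpredD // Aint_conj.
Qed.
Lemma inO_norm {x} : inO m x -> exists n : nat, x * x^* = n%:R.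
Proof.
move=> [hk ha]; apply/natrP; rewrite natrEint mul_conjC_ge0 andbT.
by apply: Cint_rat_Aint; [exact: K_norm_rat | rewrite rpredM // Aint_conj].
Qed.

Section Ideal.
Variable P : algC -> Prop.
Hypothesis hP : prime_ideal m P.

Lemma P_O {x} : P x -> inO m x. Proof. by case: hP => h _; apply: h. Qed.
Lemma P_0 : P 0. Proof. by case: hP => _ []. Qed.
Lemma P_sub {x y} : P x -> P y -> P (x - y). Proof. by case: hP => _ [_ []] h _; apply: h. Qed.
Lemma P_mul {a x} : inO m a -> P x -> P (a * x). Proof. by case: hP => _ [_ [_ []]] h _; apply: h. Qed.
Lemma P_1 : ~ P 1. Proof. by case: hP => _ [_ [_ [_ []]]]. Qed.
Lemma P_nz : exists x, P x /\ x != 0. Proof. by case: hP => _ [_ [_ [_ [_ []]]]]. Qed.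
Lemma P_prime {x y} : inO m x -> inO m y -> P (x * y) -> P x \/ P y.
Proof. by case: hP => _ [_ [_ [_ [_ [_ h]]]]]; apply: h. Qed.
Lemma P_opp {x} : P x -> P (- x). Proof. by move=> hx; rewrite -sub0r; apply: P_sub => //; apply: P_0. Qed.
Lemma P_add {x y} : P x -> P y -> P (x + y).
Proof. by move=> hx hy; rewrite -[y]opprK; apply: P_sub => //; apply: P_opp. Qed.
Lemma P_mulr {a x} : inO m a -> P x -> P (x * a). Proof. by rewrite mulrC; apply: P_mul. Qed.

Lemma P_has_prime : exists p, prime p /\ P p%:R.
Proof.
have [x [Px nx]] := P_nz.
have [n hn] := inO_norm (P_O Px).
have Pn : P n%:R by rewrite -hn; apply: P_mulr => //; apply: inO_conj; apply: P_O.
have n0 : (0 < n)%N.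
  by rewrite lt0n; apply/eqP => n0; move: hn; rewrite n0 => /eqP; rewrite mul_conjC_eq0 (negbTE nx).
elim/ltn_ind: n n0 Pn {hn} => n IH n0 Pn.
have n1 : (1 < n)%N.
  rewrite ltn_neqAle n0 andbT; apply/eqP => n1; apply: P_1; by rewrite -[1]/(1%:R) n1.
have hd := pdiv_dvd n.
have := divnK hd => hnd.
move: Pn; rewrite -hnd natrM => /P_prime [] //; try apply: inO_nat.
- move=> h; apply: IH h; first by rewrite ltn_Pdiv // prime_gt1 // pdiv_prime.
  by rewrite divn_gt0 ?pdiv_gt0 // dvdn_leq.

- by move=> h; exists (pdiv n); rewrite pdiv_prime.
Qed.

Section WithP.
Variable p : nat.
Hypothesis hp : prime p.
Hypothesis Pp : P p%:R.

Lemma P_intdvd (k : int) : P k%:~R -> (p %| k)%Z.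
Proof.
move=> Pk; apply/negPn/negP => nd.
have cop : coprimez k p.
  rewrite coprimez_sym coprimezE /= prime_coprime //.
have [[u v] /= huv] := coprimezP _ _ cop.
apply: P_1.
have -> : (1 : algC) = u%:~R * k%:~R + v%:~R * p%:R.
  by rewrite -[p%:R]/((p%:Z)%:~R) -!intrM -intrD huv.
by apply: P_add; apply: P_mul => //; apply: inO_int.
Qed.

Lemma P_natdvd (n : nat) : P n%:R -> (p %| n)%N.
Proof. by move=> h; have := @P_intdvd n h; rewrite dvdzE. Qed.

Lemma P_Cint x : x \in Num.int -> P x -> x / p%:R \in Num.int.
Proof.
move=> /intrP [k ->] Pk.
have hd := @P_intdvd k Pk.
rewrite -(divzK hd) intrM /= mulfK ?intr_int //.
by rewrite pnatr_eq0; case: p hp.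
Qed.


Lemma inK_invnat (k : nat) : inK m (k%:R)^-1.
Proof. by rewrite -(ratr_nat (algC : fieldType)) -fmorphV; apply: inK_rat. Qed.

Lemma p_neq0 : (p%:R : algC) != 0.
Proof. by rewrite pnatr_eq0; case: p hp. Qed.

Lemma nat_split {d n : nat} : (d %| n)%N -> (n%:R : algC) = (n %/ d)%N%:R * d%:R.
Proof. by move=> h; rewrite -natrM divnK. Qed.

Lemma P_natP n : P n%:R -> exists k, (n%:R : algC) = k%:R * p%:R.
Proof. by move=> /P_natdvd h; exists (n %/ p)%N; apply: nat_split. Qed.

Lemma norm_P x : P x -> exists n, x * x^* = n%:R /\ (p %| n)%N.
Proof.
move=> Px; have [n hn] := inO_norm (P_O Px); exists n; split => //.
by apply: P_natdvd; rewrite -hn; apply: P_mulr => //; apply: inO_conj; apply: P_O.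
Qed.

Lemma conj_divp (x : algC) : (x / p%:R)^* = x^* / p%:R.
Proof. by rewrite rmorphM /= fmorphV /= conjC_nat. Qed.

Lemma local_gen : exists (pi : algC) (s : nat),
  [/\ P pi, pi != 0, P (s%:R - 1) &
      forall x, P x -> exists y, inO m y /\ s%:R * x = pi * y].
Proof.
have pq : (p%:R : algC) * (p%:R)^-1 = 1 by rewrite mulfV // p_neq0.
have [[pi [n [Ppi hn nd]]] | cB] :=
  classic (exists pi n, [/\ P pi, pi * pi^* = n%:R & ~~ (p ^ 2 %| n)%N]).
- have pn : (p %| n)%N.
    by apply: P_natdvd; rewrite -hn; apply: P_mulr => //; apply: inO_conj; apply: P_O.
  have n0 : (0 < n)%N by rewrite lt0n; apply/eqP => n0; move: nd; rewrite n0 dvdn0.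
  have pi0 : pi != 0.
    apply/eqP => h; move: hn; rewrite h mul0r => /esym/eqP; rewrite pnatr_eq0 => /eqP n00; by rewrite n00 in n0.
  set c := (n %/ p)%N.
  have hc : n = (c * p)%N by rewrite divnK.
  have nc : ~~ (p %| c)%N.
    by apply: contra nd => hh; rewrite hc expnS expn1 mulnC dvdn_mul.
  have c0 : (0 < c)%N by rewrite lt0n; apply: contra nc => /eqP ->; rewrite dvdn0.
  have cop : coprime c p by rewrite coprime_sym prime_coprime.
  case: (egcdnP p c0) => km kn hk _.
  move: hk; rewrite (eqP cop) => hk.
  exists pi, (km * c)%N; split => //.
    rewrite hk natrD addrK natrM; apply: P_mul => //; apply: inO_nat.
  move=> x Px.
  exists (km%:R * (x * pi^* / p%:R)); split; last first.
    rewrite natrM hc natrM in hn *.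
    have -> : pi * (km%:R * (x * pi^* / p%:R)) = km%:R * x * (pi * pi^*) * (p%:R)^-1 by ring.
    rewrite hn; have -> : forall A B C D E : algC, A * B * (C * D) * E = A * C * B * (D * E) by move=> *; ring.
    by rewrite pq mulr1.
  apply: inO_mul; first exact: inO_nat.
  have xO := P_O Px; have piO := P_O Ppi.
  split.
    by apply: inK_mul; [apply: inK_mul; [case: xO | apply: inK_conj; case: piO] | apply: inK_invnat].
  apply: Aint_tn; rewrite conj_divp rmorphM /= conjCK.
  - have -> : x * pi^* / p%:R + x^* * pi / p%:R = (x * pi^* + (x * pi^*)^*) / p%:R.
      by rewrite rmorphM /= conjCK mulrDl.
    apply: P_Cint; first by apply: inO_trace; apply: inO_mul => //; apply: inO_conj.
    apply: P_add; first by apply: P_mulr => //; apply: inO_conj.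
    by rewrite rmorphM /= conjCK; apply: P_mul => //; apply: inO_conj.
  - have [nx [hx px]] := norm_P x Px.
    have -> : x * pi^* / p%:R * (x^* * pi / p%:R) = (x * x^*) * (pi * pi^*) * ((p%:R)^-1 * (p%:R)^-1) by ring.
    rewrite hx hn hc natrM (nat_split px).
    have -> : forall A B C D : algC, A * B * (C * B) * (D * D) = A * C * (B * D) * (B * D) by move=> *; ring.
    by rewrite pq !mulr1 -natrM natr_int.
- have hB : forall pi n, P pi -> pi * pi^* = n%:R -> (p ^ 2 %| n)%N.
    move=> pi n Ppi hn; apply/negPn/negP => nd; apply: cB; exists pi, n; split => //.
  exists p%:R, 1%N; split => //; first exact: p_neq0.
    by rewrite subrr; apply: P_0.
  move=> x Px; exists (x / p%:R); split; last first.
    by rewrite mul1r mulrC -mulrA [_^-1 * _]mulrC pq mulr1.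
  have xO := P_O Px.
  split; first by apply: inK_mul; [case: xO | apply: inK_invnat].
  have [nx hx] := inO_norm xO.
  have px := hB _ _ Px hx.
  have pq2 : (p%:R * p%:R) * ((p%:R)^-1 * (p%:R)^-1) = 1 :> algC.
    by rewrite mulrACA pq mulr1.
  apply: Aint_tn; rewrite conj_divp.
  - have Pxp : P (x + p%:R) by apply: P_add.
    have [ny hy] := inO_norm (P_O Pxp).
    have py := hB _ _ Pxp hy.
    have e : (x + p%:R) * (x + p%:R)^* = x * x^* + p%:R * (x + x^*) + p%:R * p%:R.
      by rewrite rmorphD /= conjC_nat; ring.
    rewrite hy hx (nat_split py) (nat_split px) natrX in e.
    have -> : x / p%:R + x^* / p%:R = (ny %/ p ^ 2)%N%:R - (nx %/ p ^ 2)%N%:R - 1.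
      apply: (mulIf p_neq0).
      have -> : (x / p%:R + x^* / p%:R) * p%:R = (x + x^*) * (p%:R * (p%:R)^-1) by ring.
      rewrite pq mulr1.
      apply: (mulfI p_neq0).
      have -> : p%:R * (x + x^*) = (ny %/ p ^ 2)%N%:R * p%:R ^+ 2 - (nx %/ p ^ 2)%N%:R * p%:R ^+ 2 - p%:R * p%:R by rewrite e; ring.
      ring.
    by rewrite !rpredB ?natr_int ?rpred1. 
  - have -> : x / p%:R * (x^* / p%:R) = (x * x^*) * ((p%:R)^-1 * (p%:R)^-1) by ring.
    rewrite hx (nat_split px) natrX.
    have -> : forall A B C : algC, A * B ^+ 2 * C = A * (B * B * C) by move=> *; ring.
    by rewrite pq2 mulr1 natr_int.
Qed.

End WithP.

Lemma ipow_O' {k x} : ipow m P k x -> inO m x.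
Proof.
elim => [y hy|j|j y z _ hy _ hz|j a b Pa _ hb] //; first exact: (inO_nat 0).
- exact: inO_add.
- exact: inO_mul (P_O Pa) hb.
Qed.

Lemma ipow_scale {k x} c : ipow m P k x -> inO m c -> ipow m P k (c * x).
Proof.
move=> h; elim: h c => [y hy|j|j y z _ hy _ hz|j a b Pa hb _] c hc.
- by apply: ipow_O; apply: inO_mul.
- by rewrite mulr0; apply: ipow_0.
- by rewrite mulrDr; apply: ipow_add; [apply: hy | apply: hz].
- by rewrite mulrA; apply: ipow_mul => //; apply: P_mul.
Qed.

Lemma ipow_pred {k x} : ipow m P k x -> ipow m P k.-1 x.
Proof.
elim => [y hy|j|j y z _ hy _ hz|j a b Pa hb _] /=.
- exact: ipow_O.
- exact: ipow_0.
- exact: ipow_add.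
- exact: ipow_scale hb (P_O Pa).
Qed.

Lemma ipow_mono {i j x} : (j <= i)%N -> ipow m P i x -> ipow m P j x.
Proof.
elim: i => [|i IH]; first by rewrite leqn0 => /eqP ->.
rewrite leq_eqVlt => /orP [/eqP -> //| hj] h.
by apply: IH => //; exact: (ipow_pred h).
Qed.

Lemma ipow_opp {k x} : ipow m P k x -> ipow m P k (- x).
Proof. by move=> h; rewrite -mulN1r; apply: ipow_scale => //; apply: (inO_int (-1)). Qed.
Lemma ipow_sub {k x y} : ipow m P k x -> ipow m P k y -> ipow m P k (x - y).
Proof. by move=> hx hy; apply: ipow_add => //; apply: ipow_opp. Qed.

Lemma ipow_P {k x} : ipow m P k x -> (0 < k)%N -> P x.
Proof.
elim => [y hy|j|j y z _ hy _ hz|j a b Pa hb _] //.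
- by move=> _; apply: P_0.
- by move=> h; apply: P_add; [apply: hy | apply: hz].
- by move=> _; apply: P_mulr => //; apply: ipow_O' hb.
Qed.

Lemma ipow_pow {a} k {y} : P a -> inO m y -> ipow m P k (a ^+ k * y).
Proof.
move=> Pa hy; elim: k => [|k IH]; first by rewrite expr0 mul1r; apply: ipow_O.
by rewrite exprS -mulrA; apply: ipow_mul.
Qed.

Lemma ipow_1 x : P x -> ipow m P 1 x.
Proof. by move=> h; rewrite -[x]mulr1; apply: ipow_mul => //; apply: ipow_O; apply: (inO_nat 1). Qed.

Lemma ordO_uniq {y j1 j2} : ordO_rel m P y j1 -> ordO_rel m P y j2 -> j1 = j2.
Proof.
move=> [h1 n1] [h2 n2]; case: (ltngtP j1 j2) => // hlt.
- by exfalso; apply: n1; apply: ipow_mono h2.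
- by exfalso; apply: n2; apply: ipow_mono h1.
Qed.

Lemma ordO_sum {u v a b c} : ordO_rel m P u a -> ordO_rel m P v b -> ordO_rel m P (u + v) c ->
  (minn a b <= c)%N.
Proof.
move=> [hu _] [hv _] [_ nc].
have hs : ipow m P (minn a b) (u + v).
  by apply: ipow_add; apply: ipow_mono (hu) || apply: ipow_mono (hv); rewrite ?geq_minl ?geq_minr.
rewrite leqNgt; apply/negP => lt; apply: nc; exact: ipow_mono hs.
Qed.

Section WithP2.
Variable p : nat.
Hypothesis hp : prime p.
Hypothesis Pp : P p%:R.
Variable pi : algC.
Variable s : nat.
Hypothesis Ppi : P pi.
Hypothesis pi0 : pi != 0.
Hypothesis Ps1 : P (s%:R - 1).
Hypothesis hgen : forall x, P x -> exists y, inO m y /\ s%:R * x = pi * y.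

Lemma s_notP : ~ P s%:R.
Proof.
by move=> h; apply: P_1; have := P_sub h Ps1; rewrite opprB addrC subrK.
Qed.

Lemma s_ndvd : ~~ (p %| s)%N.
Proof.
apply/negP => h; apply: s_notP; rewrite -(divnK h) natrM; apply: P_mul => //; apply: inO_nat.
Qed.

Lemma s_neq0 : (s%:R : algC) != 0.
Proof. by apply/eqP => h; apply: s_notP; rewrite h; apply: P_0. Qed.

Lemma Ps_k k : P (s%:R ^+ k - 1).
Proof.
elim: k => [|k IH]; first by rewrite expr0 subrr; apply: P_0.
have -> : s%:R ^+ k.+1 - 1 = s%:R * (s%:R ^+ k - 1) + (s%:R - 1) :> algC by rewrite exprS; ring.
by apply: P_add => //; apply: P_mul => //; apply: inO_nat.
Qed.

Lemma ipow_div {j y} : ipow m P j y -> exists w, inO m w /\ s%:R ^+ j * y = pi ^+ j * w.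
Proof.
elim => [x hx|k|k x z _ [w1 [o1 e1]] _ [w2 [o2 e2]]|k a b Pa _ [w [o e]]].
- by exists x; rewrite !expr0 !mul1r.
- by exists 0; rewrite !mulr0; split => //; apply: (inO_nat 0).
- by exists (w1 + w2); split; [apply: inO_add | rewrite !mulrDr e1 e2].
- have [a' [oa ea]] := hgen _ Pa.
  exists (a' * w); split; first exact: inO_mul.
  have -> : s%:R ^+ k.+1 * (a * b) = (s%:R * a) * (s%:R ^+ k * b) by rewrite exprS; ring.
  by rewrite ea e exprS; ring.
Qed.

Lemma dec_ord {k y y'} : inO m y -> inO m y' -> ~ P y' ->
  s%:R ^+ k * y = pi ^+ k * y' -> ordO_rel m P y k.
Proof.
move=> oy oy' ny' e; split.
  have : forall i, (i <= k)%N -> ipow m P i y.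
    elim => [|i IH] hi; first exact: ipow_O.
    have -> : y = s%:R ^+ k * y - (s%:R ^+ k - 1) * y by ring.
    apply: ipow_sub; last by apply: ipow_mul; [apply: Ps_k | apply: IH; apply: ltnW].
    by rewrite e; apply: ipow_mono hi _; apply: ipow_pow.
  by apply.
move=> /ipow_div [w [ow ew]].
have e2 : pi ^+ k * (s%:R * y') = pi ^+ k * (pi * w).
  rewrite mulrCA -e; have -> : s%:R * (s%:R ^+ k * y) = s%:R ^+ k.+1 * y by rewrite exprS mulrA.
  by rewrite ew exprS; ring.
have := mulfI (expf_neq0 k pi0) e2 => e3.
have : P (s%:R * y') by rewrite e3; apply: P_mulr.
by move/P_prime => /(_ (inO_nat s) oy') [/s_notP|/ny'].
Qed.

Lemma exists_dec {y} : inO m y -> y != 0 ->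
  exists k y', [/\ inO m y', ~ P y' & s%:R ^+ k * y = pi ^+ k * y'].
Proof.
move=> oy ny.
have [npi [hpi ppi]] := @norm_P p hp Pp _ Ppi.
have npi0 : (0 < npi)%N.
  rewrite lt0n; apply/eqP => h; move: hpi; rewrite h => /eqP; rewrite mul_conjC_eq0.
  by rewrite (negbTE pi0).
have [n hn] := inO_norm oy.
have n0 : (0 < n)%N.
  rewrite lt0n; apply/eqP => h; move: hn; rewrite h => /eqP; rewrite mul_conjC_eq0.
  by rewrite (negbTE ny).
move: {2}(logn p n) (erefl (logn p n)) => t ht.
elim/ltn_ind: t y n oy ny hn n0 ht => t IH y n oy ny hn n0 ht.
have [Py|nPy] := classic (P y); last by exists 0%N, y; rewrite !expr0 !mul1r.
have [y1 [o1 e1]] := hgen _ Py.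
have ny1 : y1 != 0.
  apply/eqP => h; move: e1; rewrite h mulr0 => /eqP; rewrite mulf_eq0 (negbTE ny) orbF.
  by rewrite (negbTE s_neq0).
have [n1 hn1] := inO_norm o1.
have n10 : (0 < n1)%N.
  rewrite lt0n; apply/eqP => h; move: hn1; rewrite h => /eqP; rewrite mul_conjC_eq0.
  by rewrite (negbTE ny1).
have en : (s * s * n)%N = (npi * n1)%N.
  apply/eqP; rewrite -(eqr_nat algC) !natrM -hn -hpi -hn1.
  have h1 : (s%:R * y) * (s%:R * y)^* = s%:R * s%:R * (y * y^*) :> algC.
    by rewrite rmorphM /= conjC_nat; ring.
  have h2 : (pi * y1) * (pi * y1)^* = (pi * pi^*) * (y1 * y1^*) :> algC.
    by rewrite rmorphM /=; ring.
  by rewrite -h1 -h2 e1.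
have s0 : (0 < s)%N by rewrite lt0n; apply/negP => /eqP h; move: s_neq0; rewrite h eqxx.
have cps : coprime p s by rewrite prime_coprime // s_ndvd.
have hl : (logn p n1 < t)%N.
  have := congr1 (logn p) en.
  rewrite !lognM ?muln_gt0 ?s0 // (logn_coprime cps) -ht.
  have : (0 < logn p npi)%N by rewrite logn_gt0 mem_primes hp npi0 ppi.
  move=> h1 h2; lia.
have [k [y' [o' n' e']]] := IH _ hl y1 n1 o1 ny1 hn1 n10 (erefl _).
exists k.+1, y'; split => //.
have -> : s%:R ^+ k.+1 * y = s%:R ^+ k * (s%:R * y) by rewrite exprSr mulrA.
by rewrite e1 mulrCA e' exprS mulrA.
Qed.

Lemma ordO_exists {y} : inO m y -> y != 0 -> exists k, ordO_rel m P y k.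
Proof.
move=> oy ny; have [k [y' [o' n' e']]] := exists_dec oy ny.
by exists k; apply: dec_ord e'.
Qed.

Lemma ordO_mul {y z j k} : inO m y -> inO m z -> y != 0 -> z != 0 ->
  ordO_rel m P y j -> ordO_rel m P z k -> ordO_rel m P (y * z) (j + k).
Proof.
move=> oy oz ny nz hj hk.
have [j' [y' [oy' ny' ey]]] := exists_dec oy ny.
have [k' [z' [oz' nz' ez]]] := exists_dec oz nz.
rewrite (ordO_uniq hj (dec_ord oy oy' ny' ey)) (ordO_uniq hk (dec_ord oz oz' nz' ez)).
apply: (@dec_ord _ _ (y' * z')); first exact: inO_mul.
- exact: inO_mul.
- by move/P_prime => /(_ oy' oz') [].
- have -> : s%:R ^+ (j' + k') * (y * z) = (s%:R ^+ j' * y) * (s%:R ^+ k' * z) by rewrite exprD; ring.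
  by rewrite ey ez exprD; ring.
Qed.


Lemma natr_neq0 {d : nat} : (0 < d)%N -> (d%:R : algC) != 0.
Proof. by rewrite pnatr_eq0 -lt0n. Qed.

Lemma rat_clear (r : rat) (dr e : nat) : denq r = dr.+1%:Z ->
  ((e * dr.+1)%:R * ratr r : algC) \in Num.int.
Proof.
move=> hd.
have h : (numq r)%:~R = r * (dr.+1)%:R :> rat by rewrite numqE hd.
have h2 : (numq r)%:~R = ratr r * (dr.+1)%:R :> algC.
  by rewrite -(ratr_int (algC : fieldType)) h rmorphM /= ratr_nat.
have -> : ((e * dr.+1)%:R * ratr r : algC) = e%:R * (numq r)%:~R by rewrite h2 natrM; ring.
by rewrite rpredM ?natr_int ?intr_int.
Qed.

Lemma inK_den {x} : inK m x -> exists d : nat, (0 < d)%N /\ inO m (d%:R * x).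
Proof.
move=> hx; have [a [b ex]] := hx.
have [da hda] := denqP a; have [db hdb] := denqP b.
exists (da.+1 * db.+1)%N; split => //.
split; first by apply: inK_mul => //; apply: inK_nat.
rewrite ex mulrDr; apply: rpredD; last rewrite mulrA; last apply: rpredM.
- by apply: Aint_Cint; rewrite mulnC; apply: rat_clear.
- by apply: Aint_Cint; apply: rat_clear.
- exact: Aint_w.
Qed.

Lemma ord_rel_exists {x} : inK m x -> x != 0 -> exists k, ord_rel m P x k.
Proof.
move=> hx nx; have [d [d0 od]] := inK_den hx.
have ndx : d%:R * x != 0 by rewrite mulf_neq0 // natr_neq0.
have [j1 h1] := ordO_exists od ndx.
have [j2 h2] := ordO_exists (inO_nat d) (natr_neq0 d0).
by exists (j1%:Z - j2%:Z); split => //; exists d, j1, j2; split.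
Qed.

Lemma ord_rel_uniq {x k1 k2} : ord_rel m P x k1 -> ord_rel m P x k2 -> k1 = k2.
Proof.
move=> [hx nx [d1 [j1 [j2 [d10 o1 r1 r2 ->]]]]] [_ _ [d2 [j1' [j2' [d20 o2 r1' r2' ->]]]]].
have n1 : d1%:R * x != 0 by rewrite mulf_neq0 // natr_neq0.
have n2 : d2%:R * x != 0 by rewrite mulf_neq0 // natr_neq0.
have ha := ordO_mul (inO_nat d2) o1 (natr_neq0 d20) n1 r2' r1.
have hb := ordO_mul (inO_nat d1) o2 (natr_neq0 d10) n2 r2 r1'.
have e : (d2%:R * (d1%:R * x) : algC) = d1%:R * (d2%:R * x) by rewrite mulrCA.
rewrite e in ha; have := ordO_uniq ha hb.
lia.
Qed.

Lemma ord_val {x k} : ord_rel m P x k -> ord m P x = k.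
Proof.
move=> h; apply: (ord_rel_uniq _ h); rewrite /ord.
apply: epsilon_spec; exists k; exact: h.
Qed.

Lemma ord_def {x d j1 j2} : inK m x -> x != 0 -> (0 < d)%N -> inO m (d%:R * x) ->
  ordO_rel m P (d%:R * x) j1 -> ordO_rel m P d%:R j2 -> ord m P x = j1%:Z - j2%:Z.
Proof. by move=> *; apply: ord_val; split => //; exists d, j1, j2; split. Qed.

Lemma ordE {x} : inK m x -> x != 0 -> ord_rel m P x (ord m P x).
Proof.
move=> hx nx; have [k hk] := ord_rel_exists hx nx; by rewrite (ord_val hk).
Qed.

Lemma ord_mul {x y} : inK m x -> inK m y -> x != 0 -> y != 0 ->
  ord m P (x * y) = ord m P x + ord m P y.
Proof.
move=> hx hy nx ny.
have [_ _ [d1 [j1 [j2 [d10 o1 r1 r2 ->]]]]] := ordE hx nx.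
have [_ _ [d2 [j1' [j2' [d20 o2 r1' r2' ->]]]]] := ordE hy ny.
have n1 : d1%:R * x != 0 by rewrite mulf_neq0 // natr_neq0.
have n2 : d2%:R * y != 0 by rewrite mulf_neq0 // natr_neq0.
have ha := ordO_mul o1 o2 n1 n2 r1 r1'.
have hb := ordO_mul (inO_nat d1) (inO_nat d2) (natr_neq0 d10) (natr_neq0 d20) r2 r2'.
have e : (d1%:R * x) * (d2%:R * y) = (d1 * d2)%:R * (x * y) :> algC by rewrite natrM; ring.
rewrite e in ha; rewrite -natrM in hb.
rewrite (ord_def (d := (d1 * d2)%N) _ _ _ _ ha hb).
- lia.
- exact: inK_mul.
- exact: mulf_neq0.
- by rewrite muln_gt0 d10.
- by rewrite -e; apply: inO_mul.
Qed.

Lemma ord_one : ord m P 1 = 0.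
Proof.
have o1 : inO m 1 := inO_nat 1.
have r : ordO_rel m P 1 0.
  split; first exact: ipow_O.
  by move=> h; apply: P_1; apply: (ipow_P h).
apply: (ord_val (k := 0)); split; first exact: (inK_nat 1).
  exact: oner_neq0.
by exists 1%N, 0%N, 0%N; split => //; rewrite mulr1.
Qed.

Lemma ord_exp {x} k : inK m x -> x != 0 -> ord m P (x ^+ k) = ord m P x * k%:Z.
Proof.
move=> hx nx; elim: k => [|k IH]; first by rewrite expr0 ord_one mulr0.
rewrite exprS ord_mul ?IH //; last exact: expf_neq0; last exact: inK_exp.
rewrite -[k.+1]addn1 PoszD mulrDr mulr1 addrC //.
Qed.

Lemma ord_opp {x} : inK m x -> x != 0 -> ord m P (- x) = ord m P x.
Proof.
move=> hx nx.
have hm1 : inK m (-1) by apply: inK_opp; apply: (inK_nat 1).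
have nm1 : (-1 : algC) != 0 by rewrite oppr_eq0 oner_neq0.
have e : ord m P (-1) = 0.
  have := ord_mul hm1 hm1 nm1 nm1; rewrite mulrNN mulr1 ord_one => h; lia.
by rewrite -mulN1r ord_mul // e add0r.
Qed.

Lemma ord_add {x y} t : inK m x -> inK m y -> x != 0 -> y != 0 -> x + y != 0 ->
  t <= ord m P x -> t <= ord m P y -> t <= ord m P (x + y).
Proof.
move=> hx hy nx ny nxy.
have [_ _ [d1 [j1 [j2 [d10 o1 r1 r2 _]]]]] := ordE hx nx.
have [_ _ [d2 [j1' [j2' [d20 o2 r1' r2' _]]]]] := ordE hy ny.
set D := (d1 * d2)%N.
have D0 : (0 < D)%N by rewrite muln_gt0 d10.
have oX : inO m (D%:R * x).
  have -> : D%:R * x = d2%:R * (d1%:R * x) by rewrite /D natrM; ring.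
  by apply: inO_mul => //; apply: inO_nat.
have oY : inO m (D%:R * y).
  have -> : D%:R * y = d1%:R * (d2%:R * y) by rewrite /D natrM; ring.
  by apply: inO_mul => //; apply: inO_nat.
have oS : inO m (D%:R * (x + y)) by rewrite mulrDr; apply: inO_add.
have nD := natr_neq0 D0.
have [a ha] := ordO_exists oX (mulf_neq0 nD nx).
have [b hb] := ordO_exists oY (mulf_neq0 nD ny).
have [c hc] := ordO_exists oS (mulf_neq0 nD nxy).
have [e he] := ordO_exists (inO_nat D) nD.
rewrite (ord_def hx nx D0 oX ha he) (ord_def hy ny D0 oY hb he).
rewrite (ord_def (inK_add hx hy) nxy D0 oS hc he).
rewrite mulrDr in hc; have := ordO_sum ha hb hc.
move=> h1 h2 h3; lia.
Qed.

Lemma two_equal {a b} : inK m a -> inK m b -> a != 0 -> b != 0 ->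
  ord m P a = ord m P b \/
  (a + b != 0 /\ (ord m P a = ord m P (a + b) \/ ord m P b = ord m P (a + b))).
Proof.
move=> ha hb na nb.
have [/eqP e|nab] := boolP (a + b == 0).
  left; have -> : b = - a by rewrite -(addKr a b) e addr0.
  by rewrite ord_opp.
have hab := inK_add ha hb.
have nnb : - b != 0 by rewrite oppr_eq0.
have nna : - a != 0 by rewrite oppr_eq0.
case: (ltgtP (ord m P a) (ord m P b)) => hlt; last by left.
- right; split => //; left.
  apply/eqP; rewrite eq_le; apply/andP; split.
    by apply: ord_add => //; apply: ltW.
  rewrite leNgt; apply/negP => h.
  have : ord m P a + 1 <= ord m P ((a + b) + - b).
    apply: ord_add => //; [exact: inK_opp| by rewrite addrK| |rewrite ord_opp //]; lia.
  rewrite addrK; lia.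
- right; split => //; right.
  apply/eqP; rewrite eq_le; apply/andP; split.
    by apply: ord_add => //; apply: ltW.
  rewrite leNgt; apply/negP => h.
  have e : a + b + - a = b by rewrite addrC addKr.
  have : ord m P b + 1 <= ord m P ((a + b) + - a).
    apply: ord_add => //; [exact: inK_opp| by rewrite e| |rewrite ord_opp //]; lia.
  rewrite e; lia.
Qed.

Lemma cong2 (x y a b : int) (l : nat) : x + a * l%:Z = y + b * l%:Z -> (x == y %[mod l%:Z])%Z.
Proof.
move=> e; have -> : x = (b - a) * l%:Z + y.
  apply/eqP; rewrite -subr_eq0; apply/eqP.
  have -> : x - ((b - a) * l%:Z + y) = (x + a * l%:Z) - (y + b * l%:Z) by ring.
  by rewrite e subrr.
by rewrite modzMDl.
Qed.

Lemma final_aux (l v n : nat) (eps : algC) : (0 < l)%N -> (0 < v)%N -> (0 < n)%N ->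
  inK m eps -> eps != 0 ->
  (pw_distinct_mod l (ord m P v%:R) (ord m P (n%:R * sqrtm m)) (ord m P eps)
   \/ pw_distinct_mod l (ord m P (2%:R * v%:R)) (ord m P eps) (ord m P eps^*)
   \/ pw_distinct_mod l (ord m P (2%:R * n%:R * sqrtm m)) (ord m P eps) (ord m P eps^*)) ->
  ~ exists (sigma : int) (eta : algC),
      inK m eta /\ v%:R * sigma%:~R ^+ l + n%:R * sqrtm m = eps * eta ^+ l.
Proof.
move=> l0 v0 n0 heps neps H [sigma [eta [heta E]]].
set W := n%:R * w in E H.
have hW : inK m W by apply: inK_mul; [apply: inK_nat | apply: inK_w].
have nW : W != 0 by rewrite mulf_neq0 ?natr_neq0 ?w_neq0.
have cW : W^* = - W by rewrite /W rmorphM /= conjC_nat w_conj mulrN.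
set Vs := v%:R * sigma%:~R ^+ l in E.
have cVs : Vs^* = Vs by rewrite /Vs rmorphM rmorphXn /= conjC_nat rmorph_int.
have neta : eta != 0.
  apply/eqP => h; move: E; rewrite h expr0n eqn0Ngt l0 mulr0 => E.
  have hW1 : W = - Vs by rewrite -(addKr Vs W) E addr0.
  have : W^* = W by rewrite hW1 rmorphN /= cVs.
  rewrite cW => /eqP; rewrite eq_sym -subr_eq0 opprK -mulr2n mulrn_eq0 /= => /eqP h2.
  by move: nW; rewrite h2 eqxx.
set A := eps * eta ^+ l in E.
set B := eps^* * eta^* ^+ l.
have E' : Vs - W = B.
  by rewrite /B -(rmorphXn _ l) -rmorphM -/A -E rmorphD /= cVs cW.
have heps' : inK m eps^* := inK_conj heps.
have neps' : eps^* != 0 by rewrite conjC_eq0.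
have heta' : inK m eta^* := inK_conj heta.
have neta' : eta^* != 0 by rewrite conjC_eq0.
have hA : inK m A by apply: inK_mul => //; apply: inK_exp.
have hB : inK m B by apply: inK_mul => //; apply: inK_exp.
have nA : A != 0 by rewrite mulf_neq0 ?expf_neq0.
have nB : B != 0 by rewrite mulf_neq0 ?expf_neq0.
have oA : ord m P A = ord m P eps + ord m P eta * l%:Z.
  by rewrite /A ord_mul ?ord_exp ?expf_neq0 //; apply: inK_exp.
have oB : ord m P B = ord m P eps^* + ord m P eta^* * l%:Z.
  by rewrite /B ord_mul ?ord_exp ?expf_neq0 //; apply: inK_exp.
have hv : inK m v%:R := inK_nat v.
have nv : (v%:R : algC) != 0 := natr_neq0 v0.
have sig0 : Vs != 0 -> sigma != 0.
  by apply: contra => /eqP h; rewrite /Vs h expr0n eqn0Ngt l0 mulr0.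
have hsig : inK m sigma%:~R := inK_int sigma.
have oVs : sigma != 0 -> ord m P Vs = ord m P v%:R + ord m P sigma%:~R * l%:Z.
  move=> ns; have ns' : (sigma%:~R : algC) != 0 by rewrite intr_eq0.
  by rewrite /Vs ord_mul ?ord_exp ?expf_neq0 //; apply: inK_exp.
have o2Vs : sigma != 0 -> ord m P (2%:R * Vs) = ord m P (2%:R * v%:R) + ord m P sigma%:~R * l%:Z.
  move=> ns; have ns' : (sigma%:~R : algC) != 0 by rewrite intr_eq0.
  have h2v : inK m (2%:R * v%:R) by apply: inK_mul; apply: inK_nat.
  have n2v : (2%:R * v%:R : algC) != 0 by rewrite mulf_neq0 // natr_neq0.
  by rewrite /Vs mulrA (ord_mul h2v) ?ord_exp ?expf_neq0 //; apply: inK_exp.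
have hVs : inK m Vs by apply: inK_mul => //; apply: inK_exp.
case: H => [[c1 c2 c3]|[[c1 c2 c3]|[c1 c2 c3]]].
- have hmA : inK m (- A) := inK_opp hA.
  have nmA : - A != 0 by rewrite oppr_eq0.
  have eS : W + - A = - Vs by rewrite -E; ring.
  case: (two_equal hW hmA nW nmA) => [h|[nz [h|h]]].
  + have : (ord m P W == ord m P eps %[mod l%:Z])%Z.
      by apply: (@cong2 _ _ 0 (ord m P eta)); rewrite mul0r addr0 h ord_opp // oA.
    by rewrite (negbTE c3).
  + have nVs : Vs != 0 by rewrite -oppr_eq0 -eS.
    have ns : sigma != 0 by apply: sig0.
    have : (ord m P v%:R == ord m P W %[mod l%:Z])%Z.
      by apply: (@cong2 _ _ (ord m P sigma%:~R) 0); rewrite mul0r addr0 h eS ord_opp ?oVs.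
    by rewrite (negbTE c1).
  + have nVs : Vs != 0 by rewrite -oppr_eq0 -eS.
    have ns : sigma != 0 by apply: sig0.
    have : (ord m P v%:R == ord m P eps %[mod l%:Z])%Z.
      apply: (@cong2 _ _ (ord m P sigma%:~R) (ord m P eta)); rewrite -oVs // -oA.
      by rewrite -(ord_opp hA nA) h eS ord_opp.
    by rewrite (negbTE c2).
- have eS : A + B = 2%:R * Vs by rewrite -E -E'; rewrite -[2%:R]/(1 + 1 : algC); ring.
  case: (two_equal hA hB nA nB) => [h|[nz [h|h]]].
  + have : (ord m P eps == ord m P eps^* %[mod l%:Z])%Z.
      by apply: (@cong2 _ _ (ord m P eta) (ord m P eta^*)); rewrite -oA -oB.
    by rewrite (negbTE c3).
  + have ns : sigma != 0.
      by apply: sig0; apply: contra nz; rewrite eS => /eqP ->; rewrite mulr0.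
    have : (ord m P (2%:R * v%:R) == ord m P eps %[mod l%:Z])%Z.
      by apply: (@cong2 _ _ (ord m P sigma%:~R) (ord m P eta)); rewrite -o2Vs // -oA h eS.
    by rewrite (negbTE c1).
  + have ns : sigma != 0.
      by apply: sig0; apply: contra nz; rewrite eS => /eqP ->; rewrite mulr0.
    have : (ord m P (2%:R * v%:R) == ord m P eps^* %[mod l%:Z])%Z.
      by apply: (@cong2 _ _ (ord m P sigma%:~R) (ord m P eta^*)); rewrite -o2Vs // -oB h eS.
    by rewrite (negbTE c2).
- have hmB : inK m (- B) := inK_opp hB.
  have nmB : - B != 0 by rewrite oppr_eq0.
  have eS : A + - B = 2%:R * n%:R * w by rewrite -E -E' -/W /W; rewrite -[2%:R]/(1 + 1 : algC); ring.
  case: (two_equal hA hmB nA nmB) => [h|[nz [h|h]]].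
  + have : (ord m P eps == ord m P eps^* %[mod l%:Z])%Z.
      apply: (@cong2 _ _ (ord m P eta) (ord m P eta^*)); rewrite -oA -oB h ord_opp //.
    by rewrite (negbTE c3).
  + have : (ord m P (2%:R * n%:R * w) == ord m P eps %[mod l%:Z])%Z.
      by apply: (@cong2 _ _ 0 (ord m P eta)); rewrite -oA h eS mul0r addr0.
    by rewrite (negbTE c1).
  + have : (ord m P (2%:R * n%:R * w) == ord m P eps^* %[mod l%:Z])%Z.
      by apply: (@cong2 _ _ 0 (ord m P eta^*)); rewrite -oB -(ord_opp hB nB) h eS mul0r addr0.
    by rewrite (negbTE c2).
Qed.

End WithP2.

End Ideal.
End Basics.

Theorem lemma9p1 (l R S T v m n : nat) (eps : algC) (q : algC -> Prop) :
  prime l ->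
  (0 < R)%N -> (0 < S)%N -> (0 < T)%N ->
  coprime R S -> coprime R T -> coprime S T ->
  (0 < v)%N -> (S * Sprime S = v ^ 2)%N ->
  (0 < m)%N -> squarefree m -> (0 < n)%N -> (T * Sprime S = m * n ^ 2)%N ->
  in_E l (R * Sprime S) n m eps ->
  prime_ideal m q ->
  (pw_distinct_mod l (ord m q v%:R) (ord m q (n%:R * sqrtm m)) (ord m q eps)
   \/ pw_distinct_mod l (ord m q (2%:R * v%:R)) (ord m q eps) (ord m q eps^*)
   \/ pw_distinct_mod l (ord m q (2%:R * n%:R * sqrtm m)) (ord m q eps) (ord m q eps^*)) ->
  ~ exists (sigma : int) (eta : algC),
      inK m eta /\ v%:R * sigma%:~R ^+ l + n%:R * sqrtm m = eps * eta ^+ l.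
Proof.
move=> hl _ _ _ _ _ _ v0 _ m0 _ n0 _ [heps neps _ _] hq H.
have [p [hp Pp]] := @P_has_prime m m0 q hq.
have [pi [s [Ppi pi0 Ps1 hgen]]] := @local_gen m m0 q hq p hp Pp.
exact: (@final_aux m m0 q hq p hp Pp pi s Ppi pi0 Ps1 hgen l v n eps (prime_gt0 hl) v0 n0 heps neps H).
Qed.
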